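(* There is a sufficiently large absolute constant $C>0$ such that the following holds. Assume $1\le d\le 10n$, and let $k_0\in[d]$, $n_0\in[n]$ satisfy $k_0n_0^2\ge Cn^2$. Then $\mathbb P(\mathcal D(k_0,n_0))\ge 1-e^{-n}$.
   Context: Let $\pi_n^1,\dots,\pi_n^d$ be independent uniformly random permutations of $[n]$. For $L\subset[d]$ and $I,J\subset[n]$ put $e_L(I,J)=\sum_{\ell\in L}\sum_{i\in I}\mathbf 1(\pi_n^\ell(i)\in J)$. The no-holes event is $$\mathcal D(k_0,n_0)=\bigcap_{L\subset[d]:|L|\ge k_0}\ \bigcap_{I,J\subset[n]:|I|,|J|\ge n_0}\Big\{e_L(I,J)\ge\frac{|L||I||J|}{2n}\Big\}.$$ *)

(* Defs.v *)
From HB Require Import structures.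
From mathcomp Require Import all_boot all_order all_algebra all_fingroup.
From mathcomp Require Import all_classical all_reals all_analysis.
Set Implicit Arguments. Unset Strict Implicit. Unset Printing Implicit Defensive.
Import Order.TTheory GRing.Theory Num.Theory.

Definition perm_family (d n : nat) := {ffun 'I_d -> {perm 'I_n}}.

Definition eL (d n : nat) (pi : perm_family d n)
    (L : {set 'I_d}) (I J : {set 'I_n}) : nat :=
  \sum_(l in L) \sum_(i in I) (pi l i \in J).

(* The no-holes event D(k0,n0): e_L(I,J) >= |L||I||J|/(2n), i.e.
   2n * e_L(I,J) >= |L||I||J| (exact, over naturals). *)
Definition no_holes (d n k0 n0 : nat) (pi : perm_family d n) : bool :=
  [forall L : {set 'I_d}, (k0 <= #|L|) ==>
    [forall I : {set 'I_n}, forall J : {set 'I_n},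
      ((n0 <= #|I|) && (n0 <= #|J|)) ==>
      (#|L| * #|I| * #|J| <= 2 * n * eL pi L I J)]].

(* Probability of an event under independent uniform permutations:
   uniform measure on the finite set of d-tuples of permutations. *)
Definition unif_prob (R : realType) (d n : nat) (E : pred (perm_family d n)) : R :=
  (#|[set pi | E pi]|%:R / #|[set: perm_family d n]|%:R)%R.
Arguments unif_prob R d n E : clear implicits.
Arguments no_holes d n k0 n0 pi : clear implicits.

(* Main.v *)
Require Import Defs.
From HB Require Import structures.
From mathcomp Require Import all_boot all_order all_algebra all_fingroup.
From mathcomp Require Import all_classical all_reals all_analysis.
From mathcomp Require Import ring lra zify.
Import Order.TTheory GRing.Theory Num.Theory.
Local Open Scope ring_scope.

Section Key.
Variable R : realType.
Variable n : nat.
Variables (K : {set 'I_n}) (c0 c1 : R).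
Hypothesis c0ge : 0 <= c0.
Hypothesis c01 : c0 <= c1.
Definition wK (y : 'I_n) : R := if y \in K then c1 else c0.

Lemma wK_ge0 y : 0 <= wK y.
Proof. rewrite /wK; case: ifP => _ //; exact: le_trans c01. Qed.

Lemma swap_le (I' : {set 'I_n}) x y y' :
  x \notin I' -> y \in K -> y' \notin K ->
  \sum_(s : {perm 'I_n} | s x == y) \prod_(i in I') wK (s i) <=
  \sum_(s : {perm 'I_n} | s x == y') \prod_(i in I') wK (s i).
Proof.
move=> xI yK y'K.
have yy' : y != y' by apply: contraNneq y'K => <-.
rewrite [in X in _ <= X](reindex_inj (mulIg (tperm y y'))) /=.
have -> : \sum_(j : {perm 'I_n} | (j * tperm y y')%g x == y') \prod_(i in I') wK ((j * tperm y y')%g i)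
   = \sum_(j : {perm 'I_n} | j x == y) \prod_(i in I') wK ((j * tperm y y')%g i).
  apply: eq_bigl => s; rewrite permM.
  apply/eqP/eqP => [h|->]; last by rewrite tpermL.
  by apply: (@perm_inj _ (tperm y y')); rewrite h tpermL.
apply: ler_sum => s /eqP sx.
apply: ler_prod => i iI; rewrite wK_ge0 /=; rewrite permM.
have siy : s i != y by rewrite -sx; apply: contraNneq xI => /perm_inj <-.
case: (eqVneq (s i) y') => [->|siy'].
  by rewrite tpermR /wK yK (negbTE y'K).
by rewrite tpermD // eq_sym.
Qed.

Lemma key_bound (I : {set 'I_n}) : (0 < n)%N ->
  \sum_(s : {perm 'I_n}) \prod_(i in I) wK (s i) <=
  n`!%:R * ((#|K|%:R * c1 + #|~:K|%:R * c0) / n%:R) ^+ #|I|.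
Proof.
move=> n0.
set A := (_ / _).
have A0 : 0 <= A.
  by rewrite /A divr_ge0 // addr_ge0 // mulr_ge0 // (le_trans c0ge c01).
have [m Hm] : exists m, #|I| = m by exists #|I|.
elim: m I Hm => [|m IH] I Hm.
  move/eqP: Hm; rewrite cards_eq0 => /eqP ->.
  under eq_bigr do rewrite big_set0.
  by rewrite sumr_const card_Sn cards0 expr0 mulr1.
have [x xI] : exists x, x \in I.
  by apply/set0Pn; rewrite -card_gt0 Hm.
have Hm' : #|I :\ x| = m by move: Hm; rewrite (cardsD1 x) xI add1n => -[].
under eq_bigr do rewrite (big_setD1 x xI) /=.
set f := fun s : {perm 'I_n} => \prod_(i in I :\ x) wK (s i).
suff H : \sum_(s : {perm 'I_n}) wK (s x) * f s <= A * \sum_(s : {perm 'I_n}) f s.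
  rewrite Hm exprS mulrCA; apply: (le_trans H); apply: ler_wpM2l => //.
  by rewrite -Hm'; apply: IH.
set T := fun y => \sum_(s : {perm 'I_n} | s x == y) f s.
have E1 : \sum_(s : {perm 'I_n}) wK (s x) * f s = \sum_(y : 'I_n) wK y * T y.
  rewrite (partition_big (fun s : {perm 'I_n} => s x) predT) //=.
  apply: eq_bigr => y _; rewrite mulr_sumr; apply: eq_bigr => s /eqP <-//.
have E2 : \sum_(s : {perm 'I_n}) f s = \sum_(y : 'I_n) T y.
  by rewrite (partition_big (fun s : {perm 'I_n} => s x) predT).
rewrite E1 E2 [X in X <= _](bigID (fun y => y \in K)) [X in _ * X](bigID (fun y => y \in K)) /=.
have -> : \sum_(y | y \in K) wK y * T y = c1 * \sum_(y | y \in K) T y.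
  by rewrite mulr_sumr; apply: eq_bigr => y yK; rewrite /wK yK.
have -> : \sum_(y | y \notin K) wK y * T y = c0 * \sum_(y | y \notin K) T y.
  by rewrite mulr_sumr; apply: eq_bigr => y yK; rewrite /wK (negbTE yK).
set SK := \sum_(y | y \in K) T y.
set SN := \sum_(y | y \notin K) T y.
have cnst : forall z : R, \sum_(y' | y' \notin K) z = z *+ #|~:K|.
  by move=> z; rewrite -sumr_const; apply: eq_bigl => w; rewrite !inE.
have key : #|~:K|%:R * SK <= #|K|%:R * SN.
  have -> : #|~:K|%:R * SK = \sum_(y | y \in K) \sum_(y' | y' \notin K) T y.
    by rewrite mulr_sumr; apply: eq_bigr => y _; rewrite cnst mulr_natl.
  have -> : #|K|%:R * SN = \sum_(y' | y' \notin K) \sum_(y | y \in K) T y'.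
    rewrite mulr_sumr; apply: eq_bigr => y _.
    by rewrite mulr_natl -sumr_const.
  rewrite exchange_big /=.
  apply: ler_sum => y' y'K; apply: ler_sum => y yK.
  apply: swap_le => //; by rewrite !inE eqxx.
have nE : n%:R = #|K|%:R + #|~:K|%:R :> R by rewrite -natrD cardsC card_ord.
have n0' : 0 < n%:R :> R by rewrite ltr0n.
rewrite /A mulrAC ler_pdivlMr // nE.
have h1 : 0 <= c1 - c0 by rewrite subr_ge0.
have h2 : 0 <= #|K|%:R * SN - #|~:K|%:R * SK by rewrite subr_ge0.
have := mulr_ge0 h1 h2.
move=> H; rewrite -subr_ge0.
suff -> : (#|K|%:R * c1 + #|~: K|%:R * c0) * (SK + SN) - (c1 * SK + c0 * SN) * (#|K|%:R + #|~: K|%:R) = (c1 - c0) * (#|K|%:R * SN - #|~: K|%:R * SK) by [].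
ring.
Qed.
End Key.

Section Tail.
Variable R : realType.
Variables (d n : nat) (L : {set 'I_d}) (I J : {set 'I_n}).
Hypothesis n0 : (0 < n)%N.

Definition wJ : 'I_n -> R := wK R n (~:J) (expR (-1)) 1.

Lemma expZ (pi : perm_family d n) : expR (- (eL pi L I J)%:R) =
  \prod_(l : 'I_d) (if l \in L then \prod_(i in I) wJ (pi l i) else 1).
Proof.
rewrite /eL natr_sum -sumrN expR_sum big_mkcond /=; apply: eq_bigr => l _.
case: ifP => // _.
rewrite natr_sum -sumrN expR_sum; apply: eq_bigr => i _.
by rewrite /wJ /wK !inE; case: (pi l i \in J) => /=; rewrite ?oppr0 ?expR0.
Qed.

Definition AJ : R := (#|~:J|%:R * 1 + #|~:~:J|%:R * expR (-1)) / n%:R.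

Lemma sum_expZ : \sum_(pi : perm_family d n) expR (- (eL pi L I J)%:R)
   <= (n`!%:R) ^+ d * AJ ^+ (#|I| * #|L|).
Proof.
under eq_bigr do rewrite expZ.
rewrite /perm_family.
rewrite -(bigA_distr_bigA (fun (l : 'I_d) (s : {perm 'I_n}) => if l \in L then \prod_(i in I) wJ (s i) else 1)) /=.
have e1 : 0 <= expR (-1) :> R by exact: expR_ge0.
have e2 : expR (-1) <= 1 :> R by rewrite expR_le1 lerN10.
have AJ0 : 0 <= AJ.
  by rewrite /AJ divr_ge0 // addr_ge0 // mulr_ge0.
apply: (@le_trans _ _ (\prod_(l : 'I_d) (if l \in L then n`!%:R * AJ ^+ #|I| else n`!%:R))).
  apply: ler_prod => l _; apply/andP; split.
    apply: sumr_ge0 => s _; case: ifP => // _.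
    by apply: prodr_ge0 => i _; apply: wK_ge0.
  case: ifP => _.
    exact: key_bound.
  by rewrite sumr_const card_Sn.
have -> : \prod_(l : 'I_d) (if l \in L then n`!%:R * AJ ^+ #|I| else n`!%:R)
   = \prod_(l : 'I_d) (n`!%:R * (if l \in L then AJ ^+ #|I| else 1)) :> R.
  by apply: eq_bigr => l _; case: ifP; rewrite ?mulr1.
rewrite big_split /= prodr_const card_ord -big_mkcond /= prodr_const.
by rewrite -exprM.
Qed.


Lemma expRN1_le : expR (-1) <= 4 / 9 :> R.
Proof.
have h : 3 / 2 <= expR (1 / 2) :> R.
  by have := expR_ge1Dx (1 / 2 : R); lra.
have h2 : expR 1 = expR (1 / 2) * expR (1 / 2) :> R.
  by rewrite -expRD; congr expR; lra.
have h3 : 9 / 4 <= expR 1 :> R.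
  rewrite h2; move: h; set x := expR (1 / 2); move=> h; nra.
rewrite expRN.
have h4 : 0 < expR 1 :> R by exact: expR_gt0.
rewrite -(@ler_pM2r _ (expR 1)) // mulVf; last by rewrite gt_eqF.
move: h3 h4; set x := expR 1; move=> h3 h4; nra.
Qed.


Lemma tail :
  #|[set pi : perm_family d n | (2 * n * eL pi L I J < #|L| * #|I| * #|J|)%N]|%:R
  <= (n`!%:R) ^+ d * expR (- ((#|L| * #|I| * #|J|)%:R / n%:R) / 18) :> R.
Proof.
set bad := [set pi | _].
set mu : R := (#|L| * #|I| * #|J|)%:R / n%:R.
have nR : 0 < n%:R :> R by rewrite ltr0n.
have mu0 : 0 <= mu by rewrite /mu divr_ge0.
have stepa : #|bad|%:R * expR (- mu / 2) <=
    \sum_(pi : perm_family d n) expR (- (eL pi L I J)%:R).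
  have -> : #|bad|%:R * expR (- mu / 2) = \sum_(pi in bad) expR (- mu / 2).
    by rewrite sumr_const mulr_natl.
  rewrite [X in _ <= X](bigID (fun pi => pi \in bad)) /= -[X in X <= _]addr0.
  apply: lerD; last by apply: sumr_ge0 => pi _; exact: expR_ge0.
  apply: ler_sum => pi.
  rewrite inE => /ltnW; rewrite -(ler_nat R) => h.
  rewrite ler_expR mulNr lerN2 /mu.
  rewrite mulrAC ler_pdivlMr // ler_pdivlMr // -mulrA.
  move: h; rewrite !natrM => h; lra.
have stepb : AJ ^+ (#|I| * #|L|) <= expR (- (1 - expR (-1)) * mu).
  have cJ : #|~:J|%:R = n%:R - #|J|%:R :> R.
    by rewrite -[in n%:R](card_ord n) -(cardsC J) natrD addrAC subrr add0r.
  have AJE : AJ = 1 + (- (1 - expR (-1)) * (#|J|%:R / n%:R)).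
    rewrite /AJ finset.setCK cJ; field; lra.
  have e1 : 0 <= expR (-1) :> R by exact: expR_ge0.
  have e2 : expR (-1) <= 1 :> R by rewrite expR_le1 lerN10.
  have AJ0 : 0 <= AJ by rewrite /AJ divr_ge0 // addr_ge0 // mulr_ge0.
  apply: (@le_trans _ _ (expR (- (1 - expR (-1)) * (#|J|%:R / n%:R)) ^+ (#|I| * #|L|))).
    apply: lerXn2r; rewrite ?nnegrE ?expR_ge0 //.
    rewrite AJE; exact: expR_ge1Dx.
  rewrite -expRM_natr ler_expR /mu !natrM; rewrite le_eqVlt; apply/orP; left; apply/eqP; field; lra.
have e4 := expRN1_le.
have N0 : 0 <= (n`!%:R) ^+ d :> R by rewrite exprn_ge0.
have H := le_trans stepa (le_trans (sum_expZ) (ler_wpM2l N0 stepb)).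
have Epos : 0 < expR (- mu / 2) :> R by exact: expR_gt0.
rewrite -(@ler_pM2r _ (expR (- mu / 2))) //; apply: (le_trans H).
rewrite -mulrA ler_wpM2l // -expRD ler_expR.
have : 0 <= (4 / 9 - expR (-1)) * mu by rewrite mulr_ge0 // subr_ge0.
move: e4; set e := expR (-1); move=> e4 h; nra.
Qed.
End Tail.

Lemma sum_ind (R : realType) (T : finType) (A : {set T}) :
  \sum_(t : T) ((t \in A)%:R : R) = #|A|%:R.
Proof.
rewrite -sum1_card natr_sum [RHS]big_mkcond; apply: eq_bigr => t _.
by case: (t \in A).
Qed.

Lemma union_bound (R : realType) (T X : finType) (P : pred X) (F : X -> {set T})
  (B : {set T}) : (forall t, t \in B -> exists2 x, P x & t \in F x) ->
  #|B|%:R <= \sum_(x | P x) (#|F x|%:R : R).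
Proof.
move=> HB.
under [X in _ <= X]eq_bigr do rewrite -(@sum_ind R T).
rewrite exchange_big /= -(@sum_ind R T B).
apply: ler_sum => t _.
case tB: (t \in B); last by apply: sumr_ge0 => x _; case: (_ \in _).
have [x Px tx] := HB t tB.
rewrite (bigD1 x) //= tx -[X in X <= _]addr0 lerD //.
by apply: sumr_ge0 => y _; case: (_ \in _).
Qed.

Theorem lemma4p1 (R : realType) :
  exists C : R, 0 < C /\
    forall (n d k0 n0 : nat),
      (1 <= d)%N -> (d <= 10 * n)%N ->
      (1 <= k0 <= d)%N -> (1 <= n0 <= n)%N ->
      C * (n%:R) ^+ 2 <= (k0 * n0 ^ 2)%:R ->
      1 - expR (- (n%:R)) <= unif_prob R d n (no_holes d n k0 n0).
Proof.
exists 234; split; first by [].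
move=> n d k0 n0 d1 dn /andP[k01 k0d] /andP[n01 n0n] HC.
have npos : (0 < n)%N by apply: leq_trans n0n.
have nR : 0 < n%:R :> R by rewrite ltr0n.
set N := n`!%:R : R.
have Npos : 0 < N ^+ d by rewrite exprn_gt0 // ltr0n fact_gt0.
have cardAll : #|[set: perm_family d n]|%:R = N ^+ d :> R.
  by rewrite cardsT card_ffun card_Sn card_ord natrX.
set G := [set pi | no_holes d n k0 n0 pi].
set B := [set pi : perm_family d n | ~~ no_holes d n k0 n0 pi].
have GB : #|G| + #|B| = #|[set: perm_family d n]|.
  have -> : B = ~: G by apply/setP => pi; rewrite !inE.
  by rewrite cardsT; exact: cardsC.
have HB : #|B|%:R <= N ^+ d * expR (- n%:R) :> R.
  pose X := ({set 'I_d} * ({set 'I_n} * {set 'I_n}))%type.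
  pose P := fun x : X => [&& (k0 <= #|x.1|)%N, (n0 <= #|x.2.1|)%N & (n0 <= #|x.2.2|)%N].
  pose F := fun x : X => [set pi : perm_family d n |
     (2 * n * eL pi x.1 x.2.1 x.2.2 < #|x.1| * #|x.2.1| * #|x.2.2|)%N].
  apply: le_trans (@union_bound R _ X P F B _) _.
    move=> pi; rewrite inE => /forallPn [L]; rewrite negb_imply.
    move=> /andP [hL /forallPn [I /forallPn [J]]].
    rewrite negb_imply => /andP [/andP [hI hJ]]; rewrite -ltnNge => h.
    exists (L, (I, J)); first by rewrite /P /= hL hI hJ.
    by rewrite inE.
  apply: (@le_trans _ _ (\sum_(x : X) (N ^+ d * expR (- (234 * n%:R) / 18)))). 
    rewrite [X in _ <= X](bigID P) /= -[X in X <= _]addr0; apply: lerD; last first.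
      by apply: sumr_ge0 => *; rewrite mulr_ge0 ?expR_ge0 ?exprn_ge0 // ltW.
    apply: ler_sum => x /and3P [h1 h2 h3].
    apply: le_trans (@tail R d n x.1 x.2.1 x.2.2 npos) _.
    rewrite -/N ler_pM2l // ler_expR.
    rewrite ler_pM2r ?invr_gt0 // lerN2.
    rewrite ler_pdivlMr // -mulrA -expr2.
    apply: (le_trans HC); rewrite ler_nat expnS expn1 !mulnA.
    by rewrite leq_mul // leq_mul.
  rewrite sumr_const card_prod card_prod.
  have cs : forall T : finType, #|{set T}| = (2 ^ #|T|)%N.
    by move=> T; have := card_powerset [set: T]; rewrite powersetT !cardsT.
  rewrite !cs !card_ord -[_ *+ (2 ^ d * _)]mulr_natr -mulrA.
  rewrite ler_pM2l //.
  have e2 : 2 <= expR 1 :> R by have := expR_ge1Dx (1 : R); lra.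
  have h1 : ((2 ^ d * (2 ^ n * 2 ^ n))%:R : R) <= expR (12 * n%:R).
    rewrite -expnD -expnD natrX.
    apply: (@le_trans _ _ (2 ^+ (12 * n))).
      rewrite ler_eXn2l //; last lra.
      lia.
    rewrite -natrM -[X in expR X]mulr1 expRM_natl.
    apply: lerXn2r; rewrite ?nnegrE //; lra.
  apply: (@le_trans _ _ (expR (- (234 * n%:R) / 18) * expR (12 * n%:R))).
    by rewrite ler_pM2l // expR_gt0.
  rewrite -expRD ler_expR; lra.
rewrite /unif_prob -/G cardAll ler_pdivlMr // mulrBl mul1r.
have -> : (#|G|%:R : R) = N ^+ d - #|B|%:R.
  by rewrite -cardAll -GB natrD addrK.
rewrite lerD2l lerN2 mulrC; exact: HB.
Qed.
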